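(* Let $k\geqslant 1$ be an integer. The following $\mathbb{Z}_p$-Lie lattices (each on a basis $x_0,x_1,x_2$ with $[x_1,x_2]=0$) are self-similar of index $p^k$: (1) $L_6(a)$ for any $a\in\mathbb{Z}_p$, where $[x_0,x_1]=ax_1$, $[x_0,x_2]=ax_2$; (2) $L_2(s,r,c)$ with $s,r\in\mathbb{N}$, $c\in\mathbb{Z}_p$, $v_p(c)=1$, where $[x_0,x_1]=p^sx_1+p^{s+r}cx_2$, $[x_0,x_2]=p^{s+r}x_1+p^sx_2$; (3) $L_7(s,a,c)$ with $s\in\mathbb{N}$, $a,c\in\mathbb{Z}_p$, where $[x_0,x_1]=p^sax_1+p^scx_2$, $[x_0,x_2]=p^sx_1$, provided either $v_p(c)=1$ and $v_p(a)\geqslant 1$, or $v_p(4c+a^2)=1$, $v_p(a)=0$ and $v_p(c)=0$; (4) for $p\geqslant 3$, $L_7(s,0,1)$ with $s\in\mathbb{N}$.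
   Context: $p$ is a prime (arbitrary unless stated), $\mathbb{N}=\{0,1,2,\dots\}$, $v_p$ is the $p$-adic valuation. A $\mathbb{Z}_p$-Lie lattice is a $\mathbb{Z}_p$-Lie algebra whose underlying module is finitely generated and free. A virtual endomorphism of $L$ is a homomorphism of algebras $\varphi:M\to L$ with $M\subseteq L$ a finite-index subalgebra, of index $[L:M]$. An ideal $I$ of $L$ is $\varphi$-invariant if it lies in the domain of every power of $\varphi$ and $\varphi(I)\subseteq I$; $\varphi$ is simple if no non-zero ideal is $\varphi$-invariant. $L$ is self-similar of index $p^k$ if it has a simple virtual endomorphism of index $p^k$. *)

(* Defs.v *)
From mathcomp Require Import all_boot.
Set Implicit Arguments. Unset Strict Implicit. Unset Printing Implicit Defensive.

(* pm p = p for p > 0 (only used to keep the moduli p^n positive; p is prime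
   in the statement, so pm p = p). *)
Definition pm (p : nat) : nat := p.-1.+1.

Lemma pm_gt0 p n : 0 < pm p ^ n.
Proof. by rewrite expn_gt0. Qed.

Lemma pm_dvd p n : pm p ^ n %| pm p ^ n.+1.
Proof. exact: dvdn_exp2l. Qed.

(* An element of Z_p: x = (x_n)_n with x_n in {0,..,p^n-1} and
   x_{n+1} = x_n mod p^n. *)
Record Zp (p : nat) := MkZp {
  zseq : nat -> nat;
  zbound : forall n, zseq n < pm p ^ n;
  zcoh : forall n, zseq n.+1 %% pm p ^ n = zseq n }.

Section ZpOps.
Variable p : nat.
Local Notation q n := (pm p ^ n).

Definition zp_nat_seq (m : nat) (n : nat) := m %% q n.
Lemma zp_nat_bound m n : zp_nat_seq m n < q n.
Proof. by rewrite /zp_nat_seq ltn_pmod ?pm_gt0. Qed.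
Lemma zp_nat_coh m n : zp_nat_seq m n.+1 %% q n = zp_nat_seq m n.
Proof. by rewrite /zp_nat_seq (modn_dvdm _ (pm_dvd p n)). Qed.
Definition zp_of_nat (m : nat) : Zp p := MkZp (zp_nat_bound m) (zp_nat_coh m).

Definition zp_add_seq (x y : Zp p) n := (zseq x n + zseq y n) %% q n.
Lemma zp_add_bound x y n : zp_add_seq x y n < q n.
Proof. by rewrite /zp_add_seq ltn_pmod ?pm_gt0. Qed.
Lemma zp_add_coh x y n : zp_add_seq x y n.+1 %% q n = zp_add_seq x y n.
Proof.
by rewrite /zp_add_seq (modn_dvdm _ (pm_dvd p n)) // -modnDm !zcoh.
Qed.
Definition zp_add (x y : Zp p) : Zp p := MkZp (zp_add_bound x y) (zp_add_coh x y).

Definition zp_mul_seq (x y : Zp p) n := (zseq x n * zseq y n) %% q n.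
Lemma zp_mul_bound x y n : zp_mul_seq x y n < q n.
Proof. by rewrite /zp_mul_seq ltn_pmod ?pm_gt0. Qed.
Lemma zp_mul_coh x y n : zp_mul_seq x y n.+1 %% q n = zp_mul_seq x y n.
Proof.
by rewrite /zp_mul_seq (modn_dvdm _ (pm_dvd p n)) // -modnMm !zcoh.
Qed.
Definition zp_mul (x y : Zp p) : Zp p := MkZp (zp_mul_bound x y) (zp_mul_coh x y).

Definition zp_opp_seq (x : Zp p) n := (q n - zseq x n) %% q n.
Lemma zp_opp_bound x n : zp_opp_seq x n < q n.
Proof. by rewrite /zp_opp_seq ltn_pmod ?pm_gt0. Qed.
Lemma zp_opp_coh x n : zp_opp_seq x n.+1 %% q n = zp_opp_seq x n.
Proof.
rewrite /zp_opp_seq (modn_dvdm _ (pm_dvd p n)) //.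
apply/eqP; rewrite -(eqn_modDr (zseq x n.+1)).
rewrite subnK; last exact: ltnW (zbound x n.+1).
rewrite -modnDmr zcoh subnK; last exact: ltnW (zbound x n).
have /dvdnP [k ->] := pm_dvd p n.
by rewrite modnMl modnn.
Qed.
Definition zp_opp (x : Zp p) : Zp p := MkZp (zp_opp_bound x) (zp_opp_coh x).

Definition zp_sub (x y : Zp p) : Zp p := zp_add x (zp_opp y).

Definition zp_val_ge (x : Zp p) (m : nat) : Prop := zseq x m = 0.
(* v_p(x) = m  (with v_p(0) = +oo) *)
Definition zp_val_eq (x : Zp p) (m : nat) : Prop :=
  zp_val_ge x m /\ ~ zp_val_ge x m.+1.
End ZpOps.

Record vec3 (p : nat) := V3 { co0 : Zp p; co1 : Zp p; co2 : Zp p }.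

Section Vec.
Variable p : nat.
Definition v0 : vec3 p := V3 (zp_of_nat p 0) (zp_of_nat p 0) (zp_of_nat p 0).
Definition vadd (x y : vec3 p) : vec3 p :=
  V3 (zp_add (co0 x) (co0 y)) (zp_add (co1 x) (co1 y)) (zp_add (co2 x) (co2 y)).
Definition vscale (a : Zp p) (x : vec3 p) : vec3 p :=
  V3 (zp_mul a (co0 x)) (zp_mul a (co1 x)) (zp_mul a (co2 x)).

(* Structure constants of a lattice with [x1,x2] = 0:
   [x0,x1] = br01, [x0,x2] = br02. *)
Record lie3 := Lie3 { br01 : vec3 p; br02 : vec3 p }.

Definition bracket (L : lie3) (x y : vec3 p) : vec3 p :=
  vadd (vscale (zp_sub (zp_mul (co0 x) (co1 y)) (zp_mul (co1 x) (co0 y))) (br01 L))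
       (vscale (zp_sub (zp_mul (co0 x) (co2 y)) (zp_mul (co2 x) (co0 y))) (br02 L)).

Definition submodule (M : vec3 p -> Prop) : Prop :=
  [/\ M v0, (forall x y, M x -> M y -> M (vadd x y))
    & (forall a x, M x -> M (vscale a x))].

Definition subalgebra (L : lie3) (M : vec3 p -> Prop) : Prop :=
  submodule M /\ (forall x y, M x -> M y -> M (bracket L x y)).

Definition ideal (L : lie3) (I : vec3 p -> Prop) : Prop :=
  submodule I /\ (forall x y, I y -> I (bracket L x y)).

Definition has_index (M : vec3 p -> Prop) (n : nat) : Prop :=
  exists r : 'I_n -> vec3 p,
    (forall v, exists i m, M m /\ v = vadd (r i) m) /\
    (forall i j m, M m -> r i = vadd (r j) m -> i = j).

(* phi : M -> L is a homomorphism of Z_p-Lie algebras (phi is given as a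
   total function; only its values on M matter). *)
Definition lie_hom (L : lie3) (M : vec3 p -> Prop) (phi : vec3 p -> vec3 p) : Prop :=
  [/\ (forall x y, M x -> M y -> phi (vadd x y) = vadd (phi x) (phi y)),
      (forall a x, M x -> phi (vscale a x) = vscale a (phi x))
    & (forall x y, M x -> M y -> phi (bracket L x y) = bracket L (phi x) (phi y))].

Definition virtual_endo (L : lie3) (M : vec3 p -> Prop) (phi : vec3 p -> vec3 p) : Prop :=
  [/\ subalgebra L M, (exists n, has_index M n) & lie_hom L M phi].

Fixpoint pow_dom (M : vec3 p -> Prop) (phi : vec3 p -> vec3 p) (n : nat)
  (x : vec3 p) : Prop :=
  match n with
  | 0 => True
  | n.+1 => M x /\ pow_dom M phi n (phi x)
  end.

Definition invariant_ideal (L : lie3) (M : vec3 p -> Prop) (phi : vec3 p -> vec3 p)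
  (I : vec3 p -> Prop) : Prop :=
  [/\ ideal L I, (forall n x, I x -> pow_dom M phi n x)
    & (forall x, I x -> I (phi x))].

Definition simple_ve (L : lie3) (M : vec3 p -> Prop) (phi : vec3 p -> vec3 p) : Prop :=
  forall I, invariant_ideal L M phi I -> forall x, I x -> x = v0.

Definition self_similar (L : lie3) (k : nat) : Prop :=
  exists (M : vec3 p -> Prop) (phi : vec3 p -> vec3 p),
    [/\ virtual_endo L M phi, has_index M (p ^ k) & simple_ve L M phi].

Local Notation zp := (zp_of_nat p).
Local Notation O := (zp 0).
Definition L6 (a : Zp p) : lie3 := Lie3 (V3 O a O) (V3 O O a).
Definition L2 (s r : nat) (c : Zp p) : lie3 :=
  Lie3 (V3 O (zp (p ^ s)) (zp_mul (zp (p ^ (s + r))) c))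
       (V3 O (zp (p ^ (s + r))) (zp (p ^ s))).
Definition L7 (s : nat) (a c : Zp p) : lie3 :=
  Lie3 (V3 O (zp_mul (zp (p ^ s)) a) (zp_mul (zp (p ^ s)) c))
       (V3 O (zp (p ^ s)) O).
End Vec.

(* Main.v *)
Require Import Defs.
From mathcomp Require Import all_boot zify.
From Stdlib Require Import Ring FunctionalExtensionality ProofIrrelevance Classical.
Set Implicit Arguments. Unset Strict Implicit. Unset Printing Implicit Defensive.

Section Main.
Variable p : nat.
Hypothesis hp : prime p.
Local Notation q n := (pm p ^ n).
Local Notation zp := (zp_of_nat p).
Local Notation Z := (Zp p).

Lemma p_gt0 : 0 < p. Proof. exact: prime_gt0. Qed.
Lemma pmE : pm p = p. Proof. by rewrite /pm prednK // p_gt0. Qed.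

Lemma zp_ext (x y : Z) : (forall n, zseq x n = zseq y n) -> x = y.
Proof.
case: x => fx bx cx; case: y => fy by_ cy /= H.
have E := functional_extensionality _ _ H. subst fy.
by rewrite (proof_irrelevance _ bx by_) (proof_irrelevance _ cx cy).
Qed.

Lemma zseq_small (x : Z) n : zseq x n %% q n = zseq x n.
Proof. by rewrite modn_small // zbound. Qed.

Lemma zp_seqE m n : zseq (zp m) n = m %% q n. Proof. by []. Qed.

Local Notation O := (zp 0).
Local Notation I1 := (zp 1).

Lemma zp_ring : ring_theory O I1 (@zp_add p) (@zp_mul p) (@zp_sub p) (@zp_opp p) eq.
Proof.
split.
- move=> x; apply: zp_ext => n /=; rewrite /zp_add_seq /= /zp_nat_seq mod0n add0n; exact: zseq_small.
- move=> x y; apply: zp_ext => n /=; by rewrite /zp_add_seq addnC.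
- move=> x y z; apply: zp_ext => n /=; by rewrite /zp_add_seq /= modnDml modnDmr addnA.
- move=> x; apply: zp_ext => n /=; rewrite /zp_mul_seq /= /zp_nat_seq modnMml mul1n; exact: zseq_small.
- move=> x y; apply: zp_ext => n /=; by rewrite /zp_mul_seq mulnC.
- move=> x y z; apply: zp_ext => n /=; by rewrite /zp_mul_seq /= modnMml modnMmr mulnA.
- move=> x y z; apply: zp_ext => n /=; by rewrite /zp_mul_seq /zp_add_seq /= modnMml modnDm mulnDl.
- by [].
- move=> x; apply: zp_ext => n /=; rewrite /zp_add_seq /zp_opp_seq /= /zp_nat_seq modnDmr subnKC ?modnn ?mod0n //.
  exact: ltnW (zbound x n).
Qed.

Add Ring zpR : zp_ring.

Lemma zpD m n : zp (m + n) = zp_add (zp m) (zp n).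
Proof. apply: zp_ext => i /=; by rewrite /zp_add_seq /zp_nat_seq modnDm. Qed.
Lemma zpM m n : zp (m * n) = zp_mul (zp m) (zp n).
Proof. apply: zp_ext => i /=; by rewrite /zp_mul_seq /zp_nat_seq modnMm. Qed.

Local Notation "x +^ y" := (zp_add x y) (at level 50, left associativity).
Local Notation "x -^ y" := (zp_sub x y) (at level 50, left associativity).
Local Notation "x *^ y" := (zp_mul x y) (at level 40, left associativity).
Local Notation "~^ x" := (zp_opp x) (at level 35, right associativity).
Local Notation vle n x := (zp_val_ge x n).

Lemma vle0 (x : Z) : vle 0 x.
Proof. by have := zbound x 0; rewrite expn0 /zp_val_ge; case: (zseq x 0). Qed.

Lemma zcoh_le (x : Z) m n : m <= n -> zseq x n %% q m = zseq x m.
Proof.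
move=> /subnK <-; elim: (n - m) => [|d IH]; first by rewrite add0n zseq_small.
have hd : q m %| q (d + m) by apply: dvdn_exp2l; rewrite leq_addl.
by rewrite addSn -(modn_dvdm _ hd) zcoh IH.
Qed.

Lemma vle_mono (x : Z) m n : m <= n -> vle n x -> vle m x.
Proof. by rewrite /zp_val_ge => /zcoh_le <- ->; rewrite mod0n. Qed.

Lemma vle_dvd (x : Z) m n : m <= n -> vle m x -> q m %| zseq x n.
Proof. by move=> /(zcoh_le x) H; rewrite /zp_val_ge -H => /eqP. Qed.

Lemma vle_add (x y : Z) n : vle n x -> vle n y -> vle n (x +^ y).
Proof. by rewrite /zp_val_ge /= /zp_add_seq => -> ->; rewrite mod0n. Qed.
Lemma vle_opp (x : Z) n : vle n x -> vle n (~^ x).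
Proof. by rewrite /zp_val_ge /= /zp_opp_seq => ->; rewrite subn0 modnn. Qed.
Lemma vle_sub (x y : Z) n : vle n x -> vle n y -> vle n (x -^ y).
Proof. by move=> hx hy; apply: vle_add => //; apply: vle_opp. Qed.
Lemma vle_mull (x y : Z) n : vle n y -> vle n (x *^ y).
Proof. by rewrite /zp_val_ge /= /zp_mul_seq => ->; rewrite muln0 mod0n. Qed.
Lemma vle_mulr (x y : Z) n : vle n x -> vle n (x *^ y).
Proof. by rewrite /zp_val_ge /= /zp_mul_seq => ->; rewrite mul0n mod0n. Qed.

Lemma vle_P (x : Z) m j : vle m x -> vle (m + j) (zp (p ^ j) *^ x).
Proof.
move=> hx; rewrite /zp_val_ge /= /zp_mul_seq /= /zp_nat_seq modnMml.
have := vle_dvd (leq_addr j m) hx; rewrite pmE => /dvdnP [t ->].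
by rewrite mulnCA -expnD [j + m]addnC modnMl.
Qed.

Lemma vle_P1 (x : Z) m : vle m x -> vle m.+1 (zp p *^ x).
Proof. by move=> /(vle_P 1); rewrite expn1 addn1. Qed.

Lemma Pcancel (y : Z) n j : vle (n + j) (zp (p ^ j) *^ y) -> vle n y.
Proof.
case: n => [|n] H; first exact: vle0.
move: H; rewrite /zp_val_ge /= /zp_mul_seq /= /zp_nat_seq pmE.
rewrite (modn_small (m := p ^ j)); last by rewrite ltn_exp2l ?prime_gt1 // addSn ltnS leq_addl.
move/eqP; rewrite -/(dvdn _ _) [n.+1 + j]addnC expnD dvdn_pmul2l ?expn_gt0 ?p_gt0 //.
move=> Hd; have := zcoh_le y (leq_addl j n.+1); rewrite pmE; move/eqP: Hd => ->.
by move=> <-.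
Qed.

Lemma unit_cancel (g y : Z) n : ~ vle 1 g -> vle n (g *^ y) -> vle n y.
Proof.
case: n => [|n] hg H; first exact: vle0.
move: H; rewrite /zp_val_ge /= /zp_mul_seq => /eqP; rewrite -/(dvdn _ _).
rewrite Gauss_dvdr.
  move=> /dvdnP [t Ht]; move: (zbound y n.+1); rewrite Ht.
  by case: t {Ht} => [|t]; rewrite ?mul0n // mulSn ltnNge leq_addr.
rewrite pmE coprime_pexpl // prime_coprime //; apply/negP => /dvdnP [t Ht].
apply: hg; rewrite /zp_val_ge -(zcoh_le g (isT : 1 <= n.+1)) Ht expn1 pmE.
by rewrite modnMl.
Qed.

Lemma zero_of_vle (x : Z) : (forall n, vle n x) -> x = O.
Proof. move=> H; apply: zp_ext => n; by rewrite H /= /zp_nat_seq mod0n. Qed.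


Definition sh_seq j (x : Z) n := zseq x (n + j) %/ q j.
Lemma sh_bound j x n : sh_seq j x n < q n.
Proof. by rewrite /sh_seq ltn_divLR ?pm_gt0 // -expnD zbound. Qed.
Lemma sh_coh j x n : sh_seq j x n.+1 %% q n = sh_seq j x n.
Proof. by rewrite /sh_seq modn_divl -expnD zcoh_le // addSn. Qed.
Definition sh j (x : Z) : Z := MkZp (sh_bound j x) (sh_coh j x).

Lemma sh_mul j (x : Z) : vle j x -> x = zp (p ^ j) *^ sh j x.
Proof.
move=> hx; apply: zp_ext => n /=; rewrite /zp_mul_seq /= /sh_seq /zp_nat_seq modnMml.
have := vle_dvd (leq_addl n j) hx; rewrite -(zcoh_le x (leq_addr j n)) !pmE => /divnK.
by rewrite mulnC => ->.
Qed.

Lemma sh_Pmul j (y : Z) : sh j (zp (p ^ j) *^ y) = y.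
Proof.
apply: zp_ext => n /=; rewrite /sh_seq /= /zp_mul_seq /zp_nat_seq modnMml.
rewrite -(zcoh_le y (leq_addr j n)) !pmE.
by rewrite [n + j]addnC expnD -muln_modr mulKn ?expn_gt0 ?p_gt0.
Qed.

Lemma vle_res (x : Z) n : vle n (x -^ zp (zseq x n)).
Proof.
rewrite /zp_val_ge /= /zp_add_seq /= /zp_opp_seq /= /zp_nat_seq zseq_small modnDmr subnKC ?modnn //.
exact: ltnW (zbound x n).
Qed.

Lemma vle_eq_seq (x y m : Z) n : vle n m -> x = y +^ m -> zseq x n = zseq y n.
Proof. by move=> hm ->; rewrite /= /zp_add_seq hm addn0 zseq_small. Qed.


Lemma vleO n : vle n O.
Proof. by rewrite /zp_val_ge /= /zp_nat_seq mod0n. Qed.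

Lemma zp_domain (x a : Z) : x *^ a = O -> a <> O -> x = O.
Proof.
move=> hxa ha.
have [n0 hn0] : exists n, zseq a n != 0.
  apply: NNPP => H; apply: ha; apply: zero_of_vle => n.
  by apply/eqP; apply: contraT => hn; case: H; exists n.
case: (ex_minnP (ex_intro (fun n => zseq a n != 0) n0 hn0)) => n hn hmin.
case: n hn hmin => [|i] hn hmin; first by move: hn; rewrite (vle0 a).
have hi : vle i a by apply/eqP; apply: contraT => hi; have := hmin _ hi; rewrite ltnn.
have ea := sh_mul hi; set a' := sh i a in ea.
have hu : ~ vle 1 a'.
  move=> h1; have := vle_P i h1; rewrite -ea add1n /zp_val_ge => H; by rewrite H in hn.
apply: zero_of_vle => N; apply: (unit_cancel hu).
have : vle (N + i) (zp (p ^ i) *^ (a' *^ x)).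
  have -> : zp (p ^ i) *^ (a' *^ x) = x *^ a by rewrite ea; ring.
  by rewrite hxa; apply: vleO.
exact: Pcancel.
Qed.


Local Notation V := (vec3 p).

Lemma v3_eq (x y : V) : co0 x = co0 y -> co1 x = co1 y -> co2 x = co2 y -> x = y.
Proof. by case: x => ? ? ?; case: y => ? ? ? /= -> -> ->. Qed.

Ltac veq := apply: v3_eq => /=; ring.

Definition box e1 e2 (x : V) := vle e1 (co1 x) /\ vle e2 (co2 x).

Lemma zseq_nat_small m n : m < p ^ n -> zseq (zp m) n = m.
Proof. by move=> h; rewrite /= /zp_nat_seq pmE modn_small. Qed.

Lemma box_index e1 e2 : has_index (box e1 e2) (p ^ (e1 + e2)).
Proof.
set P1 := p ^ e1; set P2 := p ^ e2.
have hP1 : 0 < P1 by rewrite expn_gt0 p_gt0.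
have hP2 : 0 < P2 by rewrite expn_gt0 p_gt0.
have hPP : p ^ (e1 + e2) = P2 * P1 by rewrite expnD mulnC.
exists (fun i : 'I_(p ^ (e1 + e2)) => V3 O (zp (i %% P1)) (zp (i %/ P1))); split.
- move=> v.
  set z1 := zseq (co1 v) e1; set z2 := zseq (co2 v) e2.
  have hz1 : z1 < P1 by have := zbound (co1 v) e1; rewrite pmE.
  have hz2 : z2 < P2 by have := zbound (co2 v) e2; rewrite pmE.
  have hi : z2 * P1 + z1 < p ^ (e1 + e2) by rewrite hPP; nia.
  exists (Ordinal hi), (V3 (co0 v) (co1 v -^ zp z1) (co2 v -^ zp z2)); split.
    by split; rewrite /=; apply: vle_res.
  rewrite /= modnMDl modn_small // divnMDl // divn_small // addn0.
  by veq.
- move=> i j m [h1 h2] e.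
  have e1' := f_equal (@co1 p) e; have e2' := f_equal (@co2 p) e.
  move: e1' e2' => /= /(vle_eq_seq h1) E1 /(vle_eq_seq h2) E2.
  have hi : i < P2 * P1 by rewrite -hPP ltn_ord.
  have hj : j < P2 * P1 by rewrite -hPP ltn_ord.
  rewrite !zseq_nat_small ?ltn_pmod // in E1.
  rewrite !zseq_nat_small ?ltn_divLR // in E2.
  apply: val_inj => /=; by rewrite (divn_eq i P1) (divn_eq j P1) E1 E2.
Qed.

Lemma has_index_ext (M M' : V -> Prop) n : (forall x, M x <-> M' x) -> has_index M n -> has_index M' n.
Proof.
move=> H [r [h1 h2]]; exists r; split.
- move=> v; have [i [m [hm ->]]] := h1 v; exists i, m; split => //; exact/H.
- move=> i j m hm; apply: h2; exact/H.
Qed.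

Lemma has_index_transfer (B : V -> Prop) n (T Ti : V -> V) :
  (forall x, Ti (T x) = x) -> (forall x, T (Ti x) = x) ->
  (forall x y, T (vadd x y) = vadd (T x) (T y)) ->
  (forall x y, Ti (vadd x y) = vadd (Ti x) (Ti y)) ->
  has_index B n -> has_index (fun x => B (T x)) n.
Proof.
move=> h1 h2 hT hTi [r [c u]]; exists (fun i => Ti (r i)); split.
- move=> v; have [i [m [hm e]]] := c (T v); exists i, (Ti m); split; first by rewrite h2.
  by rewrite -hTi -e h1.
- move=> i j m hm e; apply: (u _ _ (T m)) => //.
  by rewrite -(h2 (r i)) e hT h2.
Qed.

Definition vleA n (x : V) := vle n (co1 x) /\ vle n (co2 x).

Lemma vscale0 (x : V) : vscale O x = v0 p.
Proof. by veq. Qed.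

Lemma generic_ss (L : lie3 p) (k : nat) (E Einv F : V -> V) (B : V -> Prop) :
  (forall y, Einv (E y) = y) ->
  (forall y y', E (vadd y y') = vadd (E y) (E y')) ->
  (forall a y, E (vscale a y) = vscale a (E y)) ->
  (forall y y', F (vadd y y') = vadd (F y) (F y')) ->
  (forall a y, F (vscale a y) = vscale a (F y)) ->
  (forall x, B x <-> exists y, x = E y) ->
  has_index B (p ^ k) ->
  (forall y y', exists b, bracket L (E y) (E y') = E b /\ F b = bracket L (F y) (F y')) ->
  simple_ve L B (fun x => F (Einv x)) ->
  self_similar L k.
Proof.
move=> hEi hEadd hEsc hFadd hFsc hB hidx hbr hs.
exists B, (fun x => F (Einv x)); split => //; split.
- split; first split.
  + apply/(hB _); exists (v0 p); by rewrite -{2}(vscale0 (v0 p)) hEsc vscale0.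
  + move=> x y /(hB _) [u ->] /(hB _) [w ->]; apply/(hB _); exists (vadd u w); by rewrite hEadd.
  + move=> a x /(hB _) [u ->]; apply/(hB _); exists (vscale a u); by rewrite hEsc.
  + move=> x y /(hB _) [u ->] /(hB _) [w ->]; have [b [e _]] := hbr u w; apply/(hB _); by exists b.
- by exists (p ^ k).
- split.
  + move=> x y /(hB _) [u ->] /(hB _) [w ->]; by rewrite -hEadd !hEi hFadd.
  + move=> a x /(hB _) [u ->]; by rewrite -hEsc !hEi hFsc.
  + move=> x y /(hB _) [u ->] /(hB _) [w ->]; have [b [e1 e2]] := hbr u w; by rewrite e1 !hEi.
Qed.

Lemma simple_na (L : lie3 p) (E Einv F : V -> V) (B : V -> Prop) :
  (forall y, Einv (E y) = y) ->
  (forall x, B x <-> exists y, x = E y) ->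
  co0 (br01 L) = O -> co0 (br02 L) = O ->
  (forall y, co0 (E y) = co0 y) ->
  (forall y, co0 y = O -> co0 (F y) = O) ->
  (forall m y z, co0 y = O -> F y = E z -> vleA m (F y) -> vleA m (F z) -> vleA m.+1 (E y)) ->
  (exists e, forall x, bracket L e x = v0 p -> co0 x = O) ->
  simple_ve L B (fun x => F (Einv x)).
Proof.
move=> hEi hB hb1 hb2 hE0 hF0 h6 [e h7] I [[_ hid] hdom hinv].
have hIB : forall x, I x -> B x by move=> x /(hdom 1) [].
have key : forall m x, I x -> co0 x = O -> vleA m x.
  elim=> [|m IH] x hx h0; first by split; apply: vle0.
  have [y ey] := (hB x).1 (hIB x hx); subst x.
  have hFy : I (F y) by have := hinv _ hx; rewrite /= hEi.
  have [z ez] := (hB _).1 (hIB _ hFy).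
  have hFz : I (F z) by have := hinv _ hFy; rewrite /= ez hEi.
  have hy0 : co0 y = O by rewrite -hE0.
  have hz0 : co0 z = O by rewrite -hE0 -ez; apply: hF0.
  exact: (h6 m y z hy0 ez (IH _ hFy (hF0 y hy0)) (IH _ hFz (hF0 z hz0))).
have azero : forall x, I x -> co0 x = O -> x = v0 p.
  move=> x hx h0; have K := fun m => key m x hx h0.
  apply: v3_eq => //=; apply: zero_of_vle => n; [exact: (K n).1 | exact: (K n).2].
move=> x hx.
have hb := hid e x hx.
have hb0 : co0 (bracket L e x) = O by rewrite /= hb1 hb2; ring.
exact: (azero x hx (h7 x (azero _ hb hb0))).
Qed.


Lemma vle_Pm (x : Z) m j : 0 < j -> vle m x -> vle m.+1 (zp (p ^ j) *^ x).
Proof. by move=> hj /(vle_P j) /vle_mono; apply; rewrite -addn1 leq_add2l. Qed.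

Lemma vle_Pj (x : Z) j : vle j (zp (p ^ j) *^ x).
Proof. by have := vle_P j (vle0 x); rewrite add0n. Qed.

Lemma box_E j (x : V) : box j j x <-> exists y, x = V3 (co0 y) (zp (p ^ j) *^ co1 y) (zp (p ^ j) *^ co2 y).
Proof.
split.
- move=> [h1 h2]; exists (V3 (co0 x) (sh j (co1 x)) (sh j (co2 x))); apply: v3_eq => //=; exact: sh_mul.
- move=> [y ->]; split; exact: vle_Pj.
Qed.

Lemma ss_even (L : lie3 p) j : 0 < j ->
  co0 (br01 L) = O -> co0 (br02 L) = O ->
  (exists e, forall x, bracket L e x = v0 p -> co0 x = O) ->
  self_similar L (j + j).
Proof.
move=> hj hb1 hb2 [e h7].
pose E := fun y : V => V3 (co0 y) (zp (p ^ j) *^ co1 y) (zp (p ^ j) *^ co2 y).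
pose Einv := fun x : V => V3 (co0 x) (sh j (co1 x)) (sh j (co2 x)).
have hEi : forall y, Einv (E y) = y by move=> y; apply: v3_eq => /=; rewrite ?sh_Pmul.
have hB : forall x, box j j x <-> exists y, x = E y by move=> x; exact: box_E.
apply: (@generic_ss L _ E Einv id (box j j)) => //.
- by move=> y y'; veq.
- by move=> a y; veq.
- exact: box_index.
- move=> y y'; exists (bracket L y y'); split => //; apply: v3_eq => /=; rewrite ?hb1 ?hb2; ring.
- apply: (@simple_na L E Einv id (box j j) hEi hB) => //.
  + move=> m y z h0 ez [h1 h2] _; split; exact: vle_Pm.
  + by exists e.
Qed.


Lemma eq_via (x y c d l : Z) : c = d -> x = y +^ l *^ (c -^ d) -> x = y.
Proof. move=> -> ->; ring. Qed.

Lemma Ps_neq0 s : zp (p ^ s) <> O.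
Proof.
move=> /(f_equal (fun x => zseq x s.+1)) /=; rewrite /zp_nat_seq pmE mod0n modn_small.
  move=> H; have : 0 < p ^ s by rewrite expn_gt0 p_gt0.
  by rewrite H.
by rewrite expnS ltn_Pmull ?prime_gt1 ?expn_gt0 ?p_gt0.
Qed.

Definition e2v : V := V3 O O I1.

Lemma box0_E k (x : V) : box 0 k x <-> exists y, x = V3 (co0 y) (co1 y) (zp (p ^ k) *^ co2 y).
Proof.
split.
- move=> [h1 h2]; exists (V3 (co0 x) (co1 x) (sh k (co2 x))); apply: v3_eq => //=; exact: sh_mul.
- move=> [y ->]; split; [exact: vle0 | exact: vle_Pj].
Qed.

Lemma box0_index k : has_index (box 0 k) (p ^ k).
Proof. by have := box_index 0 k; rewrite add0n. Qed.

Lemma ss_L6 (a : Z) k : 0 < k -> a <> O -> self_similar (L6 a) k.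
Proof.
move=> hk ha.
pose E := fun y : V => V3 (co0 y) (co1 y) (zp (p ^ k) *^ co2 y).
pose Einv := fun x : V => V3 (co0 x) (co1 x) (sh k (co2 x)).
pose F := fun y : V => V3 (co0 y) (co2 y) (co1 y).
have hEi : forall y, Einv (E y) = y by move=> y; apply: v3_eq => /=; rewrite ?sh_Pmul.
have hB : forall x, box 0 k x <-> exists y, x = E y by move=> x; exact: box0_E.
apply: (@generic_ss _ _ E Einv F (box 0 k)) => //.
all: try (by move=> ? ?; veq).
- exact: box0_index.
- move=> y y'; exists (bracket (L6 a) y y'); split; veq.
- apply: (@simple_na (L6 a) E Einv F (box 0 k) hEi hB) => //.
  + move=> m y z h0 ez [h1 h2] [h3 h4].
    have e1 := f_equal (@co1 p) ez; have e2 := f_equal (@co2 p) ez; rewrite /= in e1 e2.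
    rewrite /F /= in h1 h2 h3 h4; split => /=; first by rewrite e2; exact: vle_Pm.
    exact: vle_Pm.
  + exists e2v => x /(f_equal (@co2 p)) /= H.
    apply: (zp_domain (a := a)) => //; apply: (eq_via (l := ~^ I1) H); ring.
Qed.

Lemma ss_L6_0 k : 0 < k -> self_similar (L6 O) k.
Proof.
move=> hk.
pose E := fun y : V => V3 (co0 y) (co1 y) (zp (p ^ k) *^ co2 y).
pose Einv := fun x : V => V3 (co0 x) (co1 x) (sh k (co2 x)).
pose F := fun y : V => V3 (co2 y) (co0 y) (co1 y).
have hEi : forall y, Einv (E y) = y by move=> y; apply: v3_eq => /=; rewrite ?sh_Pmul.
have hB : forall x, box 0 k x <-> exists y, x = E y by move=> x; exact: box0_E.
apply: (@generic_ss _ _ E Einv F (box 0 k)) => //.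
all: try (by move=> ? ?; veq).
- exact: box0_index.
- move=> y y'; exists (bracket (L6 O) y y'); split; veq.
- move=> I [[_ hid] hdom hinv].
  have hIB : forall x, I x -> box 0 k x by move=> x /(hdom 1) [].
  have key : forall m x, I x -> vle m (co0 x) /\ vleA m x.
    elim=> [|m IH] x hx; first by split; [|split]; apply: vle0.
    have [y ey] := (hB x).1 (hIB x hx); subst x.
    have hFy : I (F y) by have := hinv _ hx; rewrite /= hEi.
    have [z ez] := (hB _).1 (hIB _ hFy).
    have hFz : I (F z) by have := hinv _ hFy; rewrite /= ez hEi.
    have [w ew] := (hB _).1 (hIB _ hFz).
    have hFw : I (F w) by have := hinv _ hFz; rewrite /= ew hEi.
    have [h0 [h1 h2]] := IH _ hFw; rewrite /F /= in h0 h1 h2.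
    move: (f_equal (@co0 p) ez) (f_equal (@co1 p) ez) (f_equal (@co2 p) ez) => /= a0 a1 a2.
    move: (f_equal (@co0 p) ew) (f_equal (@co1 p) ew) (f_equal (@co2 p) ew) => /= b0 b1 b2.
    split; [|split] => /=.
    * by rewrite a1 b2; apply: vle_Pm.
    * by rewrite a2 b0; apply: vle_Pm.
    * by apply: vle_Pm => //; rewrite a0 b1.
  move=> x hx; apply: v3_eq => /=; apply: zero_of_vle => n; have [h0 [h1 h2]] := key n x hx; done.
Qed.


Lemma boxg_E e1 e2 (x : V) : box e1 e2 x <-> exists y, x = V3 (co0 y) (zp (p ^ e1) *^ co1 y) (zp (p ^ e2) *^ co2 y).
Proof.
split.
- move=> [h1 h2]; exists (V3 (co0 x) (sh e1 (co1 x)) (sh e2 (co2 x))); apply: v3_eq => //=; exact: sh_mul.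
- move=> [y ->]; split; exact: vle_Pj.
Qed.

Lemma vle_P_ge (x : Z) n j m : vle n x -> m <= n + j -> vle m (zp (p ^ j) *^ x).
Proof. by move=> /(vle_P j) h hm; exact: vle_mono hm h. Qed.

Lemma val1_split (c : Z) : zp_val_eq c 1 -> exists g, c = zp p *^ g /\ ~ vle 1 g.
Proof.
move=> [h1 h2]; exists (sh 1 c); have e := sh_mul h1; rewrite expn1 in e; split => //.
move=> hg; apply: h2; rewrite e; exact: vle_P1.
Qed.

Lemma val_ge1_split (a : Z) : vle 1 a -> exists g, a = zp p *^ g.
Proof. by move=> h1; exists (sh 1 a); have e := sh_mul h1; rewrite expn1 in e. Qed.

Lemma h7_L7 s (a c : Z) : exists e, forall x, bracket (L7 s a c) e x = v0 p -> co0 x = O.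
Proof.
exists e2v => x /(f_equal (@co1 p)) /= H.
apply: (@zp_domain _ (zp (p ^ s))); last exact: Ps_neq0.
apply: (eq_via (l := ~^ I1) H); ring.
Qed.

Lemma h7_L2 s r (c : Z) : exists e, forall x, bracket (L2 s r c) e x = v0 p -> co0 x = O.
Proof.
exists e2v => x /(f_equal (@co2 p)) /= H.
apply: (@zp_domain _ (zp (p ^ s))); last exact: Ps_neq0.
apply: (eq_via (l := ~^ I1) H); ring.
Qed.

Lemma ss_L2_odd s r (c : Z) i : zp_val_eq c 1 -> self_similar (L2 s r c) (i + i).+1.
Proof.
move=> /val1_split [g [hc hg]]; subst c.
rewrite -addnS.
pose E := fun y : V => V3 (co0 y) (zp (p ^ i) *^ co1 y) (zp (p ^ i.+1) *^ co2 y).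
pose Einv := fun x : V => V3 (co0 x) (sh i (co1 x)) (sh i.+1 (co2 x)).
pose F := fun y : V => V3 (co0 y) (co2 y) (g *^ co1 y).
have hEi : forall y, Einv (E y) = y by move=> y; apply: v3_eq => /=; rewrite ?sh_Pmul.
have hB : forall x, box i i.+1 x <-> exists y, x = E y by move=> x; exact: boxg_E.
apply: (@generic_ss _ _ E Einv F (box i i.+1)) => //.
all: try (by move=> ? ?; veq).
- exact: box_index.
- move=> y y'.
  set t1 := co0 y *^ co1 y' -^ co1 y *^ co0 y'.
  set t2 := co0 y *^ co2 y' -^ co2 y *^ co0 y'.
  exists (V3 (co0 (bracket (L2 s r (zp p *^ g)) y y'))
     (t1 *^ zp (p ^ s) +^ zp p *^ t2 *^ zp (p ^ (s + r)))
     (t1 *^ zp (p ^ (s + r)) *^ g +^ t2 *^ zp (p ^ s))).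
  rewrite /t1 /t2 /E /F; split; apply: v3_eq => /=; rewrite ?expnSr ?zpM; ring.
- apply: (@simple_na (L2 s r (zp p *^ g)) E Einv F (box i i.+1) hEi hB) => //.
  + move=> m y z h0 ez [h1 h2] [h3 h4].
    have e1 := f_equal (@co1 p) ez; have e2 := f_equal (@co2 p) ez; rewrite /= in e1 e2.
    rewrite /F /= in h1 h2 h3 h4; split => /=.
    * have hy1 : vle (m + i.+1) (co1 y).
        apply: (unit_cancel hg); rewrite e2; exact: vle_P.
      apply: (vle_P_ge hy1); lia.
    * exact: vle_Pm.
  + exact: h7_L2.
Qed.

Lemma ss_L7a_odd s (a c : Z) i : zp_val_eq c 1 -> vle 1 a -> self_similar (L7 s a c) (i + i).+1.
Proof.
move=> /val1_split [g [hc hg]] /val_ge1_split [al ha]; subst c a.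
rewrite -addnS.
pose E := fun y : V => V3 (co0 y) (zp (p ^ i) *^ co1 y) (zp (p ^ i.+1) *^ co2 y).
pose Einv := fun x : V => V3 (co0 x) (sh i (co1 x)) (sh i.+1 (co2 x)).
pose F := fun y : V => V3 (co0 y) (al *^ co1 y +^ co2 y) (g *^ co1 y).
have hEi : forall y, Einv (E y) = y by move=> y; apply: v3_eq => /=; rewrite ?sh_Pmul.
have hB : forall x, box i i.+1 x <-> exists y, x = E y by move=> x; exact: boxg_E.
apply: (@generic_ss _ _ E Einv F (box i i.+1)) => //.
all: try (by move=> ? ?; veq).
- exact: box_index.
- move=> y y'.
  set t1 := co0 y *^ co1 y' -^ co1 y *^ co0 y'.
  set t2 := co0 y *^ co2 y' -^ co2 y *^ co0 y'.
  exists (V3 (co0 (bracket (L7 s (zp p *^ al) (zp p *^ g)) y y'))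
     (zp (p ^ s) *^ (zp p *^ al *^ t1 +^ zp p *^ t2))
     (zp (p ^ s) *^ g *^ t1)).
  rewrite /t1 /t2 /E /F; split; apply: v3_eq => /=; rewrite ?expnSr ?zpM; ring.
- apply: (@simple_na (L7 s (zp p *^ al) (zp p *^ g)) E Einv F (box i i.+1) hEi hB) => //.
  + move=> m y z h0 ez [h1 h2] [h3 h4].
    have e1 := f_equal (@co1 p) ez; have e2 := f_equal (@co2 p) ez; rewrite /= in e1 e2.
    rewrite /F /= in h1 h2 h3 h4.
    have hy1 : vle m (co1 y) by apply: (unit_cancel hg).
    have hz1 : vle m (co1 z) by apply: (unit_cancel hg).
    have hz2 : vle m (co2 z).
      have -> : co2 z = (al *^ co1 z +^ co2 z) -^ al *^ co1 z by ring.
      by apply: vle_sub => //; apply: vle_mull.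
    have hy2 : vle m (co2 y).
      have -> : co2 y = (al *^ co1 y +^ co2 y) -^ al *^ co1 y by ring.
      by apply: vle_sub => //; apply: vle_mull.
    split => /=.
    * have hy1' : vle (m + i.+1) (co1 y).
        apply: (unit_cancel hg); rewrite e2; exact: vle_P.
      apply: (vle_P_ge hy1'); lia.
    * exact: vle_Pm.
  + exact: h7_L7.
Qed.


Lemma nat_unit n : ~~ (p %| n) -> ~ vle 1 (zp n).
Proof. by move=> h e; move: h; rewrite /zp_val_ge /= /zp_nat_seq pmE expn1 in e; rewrite /dvdn e. Qed.

Lemma odd_p : p != 2 -> odd p.
Proof. by move=> h; case: (even_prime hp) => // e; rewrite e in h. Qed.

Lemma not_dvd2 : p != 2 -> ~~ (p %| 2).
Proof. by move=> h; rewrite dvdn_prime2. Qed.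

Lemma not_dvd4 : p != 2 -> ~~ (p %| 4).
Proof. by move=> h; rewrite (Euclid_dvdM 2 2 hp) orbb; apply: not_dvd2. Qed.

Lemma z4 : zp 4 = zp 2 *^ zp 2. Proof. exact: (zpM 2 2). Qed.
Lemma z2 : zp 2 = I1 +^ I1. Proof. exact: (zpD 1 1). Qed.

Lemma half_split n : odd n -> zp n = I1 +^ zp 2 *^ zp n./2.
Proof.
move=> ho; rewrite -zpM -zpD; congr (zp_of_nat p _).
by rewrite mul2n -{1}(odd_double_half n) ho.
Qed.

Lemma ss_L7b_odd s (a c : Z) i : zp_val_eq (zp 4 *^ c +^ a *^ a) 1 -> zp_val_eq a 0 ->
  self_similar (L7 s a c) (i + i).+1.
Proof.
move=> [hd1 hd2] [_ ha1].
have hp2 : p != 2.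
  apply/eqP => ep; apply: (ha1).
  have h4 : vle 1 (zp 4 *^ c).
    have -> : zp 4 *^ c = zp p *^ (zp 2 *^ c).
      have -> : zp 4 = zp (p * 2) by congr (zp_of_nat p _); rewrite ep.
      by rewrite zpM; ring.
    exact: vle_P1 (vle0 _).
  have h2 : vle 1 (a *^ a).
    have -> : a *^ a = (zp 4 *^ c +^ a *^ a) -^ zp 4 *^ c by ring.
    exact: vle_sub.
  exact: unit_cancel ha1 h2.
have u2 : ~ vle 1 (zp 2) by apply: nat_unit; apply: not_dvd2.
have u4 : ~ vle 1 (zp 4) by apply: nat_unit; apply: not_dvd4.
have hP := half_split (odd_p hp2); set h := p./2 in hP.
set b := zp h *^ a.
have [g hc] : exists g, c = zp p *^ g +^ b *^ (a +^ b).
  set X := c -^ b *^ (a +^ b).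
  have hX : vle 1 X.
    apply: (unit_cancel u4).
    have -> : zp 4 *^ X = (zp 4 *^ c +^ a *^ a) -^ zp p *^ (zp p *^ a *^ a).
      by rewrite /X /b hP z4 z2; ring.
    apply: vle_sub => //; exact: vle_P1 (vle0 _).
  exists (sh 1 X); have := sh_mul hX; rewrite expn1 => eX.
  by rewrite -eX /X; ring.
subst c.
set e := zp 2 *^ g +^ a *^ b.
set dl := a *^ a +^ zp 2 *^ e.
have hdl : ~ vle 1 dl.
  move=> h1; apply: hd2.
  have -> : zp 4 *^ (zp p *^ g +^ b *^ (a +^ b)) +^ a *^ a = zp p *^ dl.
    by rewrite /dl /e /b hP z4 z2; ring.
  exact: vle_P1.
pose E := fun y : V => V3 (co0 y) (zp (p ^ i) *^ co1 y)
                         (zp (p ^ i) *^ (b *^ co1 y) +^ zp (p ^ i.+1) *^ co2 y).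
pose Einv := fun x : V => V3 (co0 x) (sh i (co1 x)) (sh i.+1 (co2 x -^ b *^ co1 x)).
pose T := fun x : V => V3 (co0 x) (co1 x) (co2 x -^ b *^ co1 x).
pose Ti := fun x : V => V3 (co0 x) (co1 x) (co2 x +^ b *^ co1 x).
pose F := fun y : V => V3 (co0 y) (a *^ co1 y +^ zp 2 *^ co2 y) (e *^ co1 y -^ a *^ co2 y).
have hEi : forall y, Einv (E y) = y.
  move=> y; apply: v3_eq => //=; first by rewrite sh_Pmul.
  rewrite (_ : _ -^ _ = zp (p ^ i.+1) *^ co2 y) ?sh_Pmul //; ring.
have hB : forall x, box i i.+1 (T x) <-> exists y, x = E y.
  move=> x; split.
  - move=> [h1 h2]; exists (Einv x); rewrite /= in h1 h2.
    have e1 := sh_mul h1; have e2 := sh_mul h2.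
    apply: v3_eq => //=.
    set u := sh i (co1 x) in e1 *; set w := sh i.+1 _ in e2 *.
    clearbody u w; rewrite e1 in e2 *.
    apply: (eq_via (l := I1) e2); ring.
  - move=> [y ->]; split => /=; first exact: vle_Pj.
    rewrite (_ : _ -^ _ = zp (p ^ i.+1) *^ co2 y); [exact: vle_Pj | ring].
rewrite -addnS.
apply: (@generic_ss _ _ E Einv F (fun x => box i i.+1 (T x))) => //.
all: try (by move=> ? ?; veq).
- apply: (@has_index_transfer _ _ T Ti); try (by move=> ? ; veq); try (by move=> ? ?; veq).
  exact: box_index.
- move=> y y'.
  set t1 := co0 y *^ co1 y' -^ co1 y *^ co0 y'.
  set t2 := co0 y *^ co2 y' -^ co2 y *^ co0 y'.
  exists (V3 O (zp (p ^ s) *^ (a *^ t1 +^ b *^ t1 +^ zp p *^ t2))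
                (zp (p ^ s) *^ (g *^ t1 -^ b *^ t2))).
  rewrite /t1 /t2 /E /F /e /b; split; apply: v3_eq => /=; rewrite ?expnSr ?zpM ?hP ?z2; ring.
- apply: (@simple_na (L7 s a (zp p *^ g +^ b *^ (a +^ b))) E Einv F _ hEi hB) => //.
  + move=> m y z h0 ez [h1 h2] [h3 h4].
    have e1 := f_equal (@co1 p) ez; have e2 := f_equal (@co2 p) ez; rewrite /= in e1 e2.
    rewrite /F /= in h1 h2 h3 h4.
    have key : dl *^ co1 y = zp (p ^ i.+1) *^ (a *^ co1 z +^ zp 2 *^ co2 z).
      rewrite (_ : dl *^ co1 y = a *^ (a *^ co1 y +^ zp 2 *^ co2 y) +^ zp 2 *^ (e *^ co1 y -^ a *^ co2 y)); last by rewrite /dl; ring.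
      rewrite e1 e2 /b expnSr zpM hP; ring.
    have hy1 : vle (m + i.+1) (co1 y) by apply: (unit_cancel hdl); rewrite key; exact: vle_P.
    have hy2 : vle m (co2 y).
      apply: (unit_cancel u2).
      have -> : zp 2 *^ co2 y = (a *^ co1 y +^ zp 2 *^ co2 y) -^ a *^ co1 y by ring.
      apply: vle_sub => //; apply: vle_mull; apply: vle_mono hy1; exact: leq_addr.
    split => /=.
    * apply: (vle_P_ge hy1); lia.
    * apply: vle_add; last exact: vle_Pm.
      apply: (vle_P_ge (n := m + i.+1)); [exact: vle_mull | lia].
  + exact: h7_L7.
Qed.


Lemma ss_L7_01 s k : p != 2 -> 0 < k -> self_similar (L7 s O I1) k.
Proof.
move=> hp2 hk.
have u2 : ~ vle 1 (zp 2) by apply: nat_unit; apply: not_dvd2.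
have hK : zp (p ^ k) = I1 +^ zp 2 *^ zp (p ^ k)./2.
  by apply: half_split; rewrite oddX odd_p // orbT.
set H := zp (p ^ k)./2 in hK.
set K := zp (p ^ k) in hK.
pose E := fun y : V => V3 (co0 y) (co1 y) (co1 y +^ K *^ co2 y).
pose Einv := fun x : V => V3 (co0 x) (co1 x) (sh k (co2 x -^ co1 x)).
pose T := fun x : V => V3 (co0 x) (co1 x) (co2 x -^ co1 x).
pose Ti := fun x : V => V3 (co0 x) (co1 x) (co2 x +^ co1 x).
pose F := fun y : V => V3 (~^ co0 y) (co1 y +^ H *^ co2 y) (~^ (co1 y +^ (H +^ I1) *^ co2 y)).
have hEi : forall y, Einv (E y) = y.
  move=> y; apply: v3_eq => //=.
  rewrite (_ : _ -^ _ = K *^ co2 y) ?sh_Pmul //; ring.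
have hB : forall x, box 0 k (T x) <-> exists y, x = E y.
  move=> x; split.
  - move=> [h1 h2]; exists (Einv x); rewrite /= in h1 h2.
    have e2 := sh_mul h2.
    apply: v3_eq => //=.
    set w := sh k _ in e2 *; clearbody w.
    apply: (eq_via (l := I1) e2); rewrite /K; ring.
  - move=> [y ->]; split => /=; first exact: vle0.
    rewrite (_ : _ -^ _ = K *^ co2 y); [exact: vle_Pj | ring].
apply: (@generic_ss _ _ E Einv F (fun x => box 0 k (T x))) => //.
all: try (by move=> ? ?; veq).
- apply: (@has_index_transfer _ _ T Ti); try (by move=> ? ; veq); try (by move=> ? ?; veq).
  exact: box0_index.
- move=> y y'.
  set t1 := co0 y *^ co1 y' -^ co1 y *^ co0 y'.
  set t2 := co0 y *^ co2 y' -^ co2 y *^ co0 y'.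
  exists (V3 O (zp (p ^ s) *^ (t1 +^ K *^ t2)) (~^ (zp (p ^ s) *^ t2))).
  rewrite /t1 /t2 /E /F; split; apply: v3_eq => /=; rewrite ?hK ?z2; ring.
- apply: (@simple_na (L7 s O I1) E Einv F _ hEi hB) => //.
  + by move=> y /= ->; ring.
  + move=> m y z h0 ez [h1 h2] [h3 h4].
    have e1 := f_equal (@co1 p) ez; have e2 := f_equal (@co2 p) ez; rewrite /= in e1 e2.
    rewrite /F /= in h1 h2 h3 h4.
    have hy2 : vle m (co2 y).
      have -> : co2 y = ~^ (~^ (co1 y +^ (H +^ I1) *^ co2 y)) -^ (co1 y +^ H *^ co2 y) by ring.
      apply: vle_sub => //; exact: vle_opp.
    have hz2 : vle m (co2 z).
      have -> : co2 z = ~^ (~^ (co1 z +^ (H +^ I1) *^ co2 z)) -^ (co1 z +^ H *^ co2 z) by ring.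
      apply: vle_sub => //; exact: vle_opp.
    have key : zp 2 *^ co1 y = ~^ (K *^ (co2 y +^ co2 z)).
      rewrite -e1 in e2.
      apply: (eq_via (l := ~^ I1) e2); rewrite hK z2; ring.
    have hy1 : vle (m + k) (co1 y).
      apply: (unit_cancel u2); rewrite key; apply: vle_opp; apply: vle_P; exact: vle_add.
    have hy1' : vle m.+1 (co1 y) by apply: vle_mono hy1; lia.
    split => //=; apply: vle_add => //; exact: vle_Pm.
  + exact: h7_L7.
Qed.

End Main.

Lemma k_split k : 0 < k -> (exists2 j, 0 < j & k = j + j) \/ exists i, k = (i + i).+1.
Proof.
move=> hk; have e := odd_double_half k; rewrite -addnn in e.
case ho: (odd k) e => /= e.
- by right; exists k./2; move: e => /=; lia.
- by left; exists k./2; move: e => /=; lia.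
Qed.

Theorem lemma1p9 (p : nat) (hp : prime p) (k : nat) (hk : 1 <= k) :
  [/\ (forall a : Zp p, self_similar (L6 a) k),
      (forall (s r : nat) (c : Zp p), zp_val_eq c 1 -> self_similar (L2 s r c) k),
      (forall (s : nat) (a c : Zp p),
          (zp_val_eq c 1 /\ zp_val_ge a 1) \/
          [/\ zp_val_eq (zp_add (zp_mul (zp_of_nat p 4) c) (zp_mul a a)) 1,
              zp_val_eq a 0 & zp_val_eq c 0] ->
          self_similar (L7 s a c) k)
    & (3 <= p -> forall s : nat, self_similar (L7 s (zp_of_nat p 0) (zp_of_nat p 1)) k)].
Proof.
split.
- move=> a; case: (classic (a = zp_of_nat p 0)) => [->|ha].
  + exact: ss_L6_0.
  + exact: ss_L6.
- move=> s r c hc; case: (k_split hk) => [[j hj ->]|[i ->]].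
  + apply: ss_even => //; exact: h7_L2.
  + exact: ss_L2_odd.
- move=> s a c H; case: (k_split hk) => [[j hj ->]|[i ->]].
  + apply: ss_even => //; exact: h7_L7.
  + case: H => [[hc ha]|[hd ha _]].
    * exact: ss_L7a_odd.
    * exact: ss_L7b_odd.
- move=> h3 s; apply: ss_L7_01 => //.
  by apply/eqP => e; rewrite e in h3.
Qed.
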